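(* Let $F$ be a bicontinuous set functor with a presentation $\varepsilon\colon H_\Sigma\to F$, let $X\neq\emptyset$ be a set and choose $p'\in\Sigma_0\cup X$. Then the free completely iterative algebra $\Psi X$ on $X$, ordered by cutting, is a cpo which is a conservative completion of the free algebra $\Phi X$ on $X$ (embedded via $m_X$). Moreover, the algebra structure of $\Psi X$ is the unique continuous extension of that of $\Phi X$: ordering $F(\Phi X)+X$ so that $\varphi_X$ is an order isomorphism and $F(\Psi X)+X$ so that $\tau_X^{-1}$ is one, $\tau_X^{-1}$ is the unique continuous map $g\colon F(\Psi X)+X\to\Psi X$ with $g\cdot(Fm_X+\mathrm{id}_X)=m_X\cdot\varphi_X$.
   Context: Bicontinuous: preserves filtered colimits and limits of $\omega^{op}$-chains. $(\Phi X,\varphi_X\colon F(\Phi X)+X\to\Phi X)$ is the initial algebra of $F(-)+X$ (= free $F$-algebra on $X$); $(\Psi X,\tau_X\colon\Psi X\to F(\Psi X)+X)$ is the terminal coalgebra of $F(-)+X$, which is the free completely iterative $F$-algebra on $X$ (algebra structure = components of $\tau_X^{-1}$). $m_X\colon\Phi X\to\Psi X$ is the unique coalgebra homomorphism from $(\Phi X,\varphi_X^{-1})$ to $(\Psi X,\tau_X)$ (injective). Presentation: finitary signature $\Sigma$, $H_\Sigma Y=\coprod_n\Sigma_n\times Y^n$, natural $\varepsilon\colon H_\Sigma\to F$ with surjective components; then $\varepsilon+\mathrm{id}_X\colon H_\Sigma(-)+X\to F(-)+X$ is a presentation of $F(-)+X$ by the signature $\Sigma_X=\Sigma+X$ (elements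 of $X$ nullary). $\Sigma$-trees over $X$: ordered rooted trees labelled in $\Sigma+X$, a node labelled in $\Sigma_n$ having $n$ children, elements of $X$ only at leaves; $\Psi_\Sigma X$ = all of them (terminal coalgebra of $H_\Sigma(-)+X$, structure $\tau'_X$ = inverse of tree tupling), $\Phi_\Sigma X$ = finite ones. $\partial'_ns$: delete nodes of height $>n$ and relabel nodes of height $n$ by $p'$. $h_X\colon\Phi_\Sigma X\to\Phi X$: the unique homomorphism of algebras for $H_\Sigma(-)+X$ into $(\Phi X,\varphi_X\cdot(\varepsilon_{\Phi X}+\mathrm{id}))$; $\sim$ its kernel; $s\sim^*s'$ iff $\partial'_ns\sim\partial'_ns'$ for all $n$. $\hat k_X\colon\Psi_\Sigma X\to\Psi X$: the unique coalgebra homomorphism for $F(-)+X$ from $(\Psi_\Sigma X,(\varepsilon+\mathrm{id})\cdot\tau'_X)$; surjective with kernel $\sim^*$. Order by cutting on $\Psi X$: $x\le y$ iff $x=y$ or $x=\hat k_X(s)$, $y=\hat k_X(s')$ with $s\sim^*\partial'_ns'$ for some $n$. $\Phi X$ has the order induced via $m_X$. Continuous = monotone and preserving existing directed joins. A conservative completion of a poset $P$ is a cpo containing $P$ as a subposet closed under existing directed joins such that every continuous map from $P$ into a cpo extends uniquely to a continuous map on it. *)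

(* Defs.v *)
From mathcomp Require Import all_boot.
From Stdlib Require Import FunctionalExtensionality.
Set Implicit Arguments. Unset Strict Implicit. Unset Printing Implicit Defensive.

Record SetFunctor := {
  Fobj :> Type -> Type;
  fmap : forall (A B : Type), (A -> B) -> Fobj A -> Fobj B;
  fmap_id : forall (A : Type) (x : Fobj A), fmap (fun a : A => a) x = x;
  fmap_comp : forall (A B C : Type) (f : A -> B) (g : B -> C) (x : Fobj A),
      fmap (fun a => g (f a)) x = fmap g (fmap f x)
}.
Arguments fmap s {A B} f _.

Record SmallCat := {
  ob : Type;
  hom : ob -> ob -> Type;
  cid : forall a, hom a a;
  ccomp : forall a b c, hom b c -> hom a b -> hom a c;
  ccomp_id_l : forall a b (f : hom a b), ccomp (cid b) f = f;
  ccomp_id_r : forall a b (f : hom a b), ccomp f (cid a) = f;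
  ccomp_assoc : forall a b c d (f : hom a b) (g : hom b c) (h : hom c d),
      ccomp h (ccomp g f) = ccomp (ccomp h g) f
}.
Arguments cid {_} a.
Arguments ccomp {_ a b c} _ _.

Definition filtered (J : SmallCat) : Prop :=
  inhabited (ob J) /\
  (forall a b : ob J, exists c, exists (f : hom a c) (g : hom b c), True) /\
  (forall (a b : ob J) (f g : hom a b), exists c (h : hom b c), ccomp h f = ccomp h g).

Record Diagram (J : SmallCat) := {
  Dob :> ob J -> Type;
  Dmap : forall a b, hom a b -> Dob a -> Dob b;
  Dmap_id : forall a (x : Dob a), Dmap (cid a) x = x;
  Dmap_comp : forall a b c (f : hom a b) (g : hom b c) (x : Dob a),
      Dmap (ccomp g f) x = Dmap g (Dmap f x)
}.
Arguments Dmap {J} d {a b} f x.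

Definition is_cocone (J : SmallCat) (D : Diagram J) (C : Type)
  (c : forall a, D a -> C) : Prop :=
  forall a b (f : hom a b) (x : D a), c b (Dmap D f x) = c a x.

Definition is_colimit (J : SmallCat) (D : Diagram J) (C : Type)
  (c : forall a, D a -> C) : Prop :=
  is_cocone c /\
  forall (Z : Type) (z : forall a, D a -> Z), is_cocone z ->
    exists h : C -> Z, (forall a x, h (c a x) = z a x) /\
      forall h' : C -> Z, (forall a x, h' (c a x) = z a x) -> forall y, h' y = h y.

Definition FDiagram (F : SetFunctor) (J : SmallCat) (D : Diagram J) : Diagram J.
Proof.
refine {| Dob := fun a => F (D a);
          Dmap := fun a b f x => fmap F (Dmap D f) x |}.
- move=> a x; rewrite -[RHS](fmap_id x); congr (fmap F _ x).
  by apply: FunctionalExtensionality.functional_extensionality => y; rewrite Dmap_id.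
- move=> a b c f g x; rewrite -fmap_comp; congr (fmap F _ x).
  by apply: FunctionalExtensionality.functional_extensionality => y; rewrite Dmap_comp.
Defined.

Definition preserves_filtered_colimits (F : SetFunctor) : Prop :=
  forall (J : SmallCat) (D : Diagram J) (C : Type) (c : forall a, D a -> C),
    filtered J -> is_colimit c ->
    is_colimit (D := FDiagram F D) (fun a => fmap F (c a)).

Definition is_chain_cone (A : nat -> Type) (f : forall n, A n.+1 -> A n)
  (L : Type) (p : forall n, L -> A n) : Prop :=
  forall n l, f n (p n.+1 l) = p n l.

Definition is_chain_limit (A : nat -> Type) (f : forall n, A n.+1 -> A n)
  (L : Type) (p : forall n, L -> A n) : Prop :=
  is_chain_cone f p /\
  forall (Z : Type) (z : forall n, Z -> A n), is_chain_cone f z ->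
    exists h : Z -> L, (forall n y, p n (h y) = z n y) /\
      forall h' : Z -> L, (forall n y, p n (h' y) = z n y) -> forall y, h' y = h y.

Definition preserves_omegaop_limits (F : SetFunctor) : Prop :=
  forall (A : nat -> Type) (f : forall n, A n.+1 -> A n)
         (L : Type) (p : forall n, L -> A n),
    is_chain_limit f p ->
    is_chain_limit (A := fun n => F (A n)) (fun n => fmap F (f n))
                   (fun n => fmap F (p n)).

Definition bicontinuous (F : SetFunctor) : Prop :=
  preserves_filtered_colimits F /\ preserves_omegaop_limits F.

Definition Gmap (F : SetFunctor) (X : Type) (A B : Type) (f : A -> B)
  (z : F A + X) : F B + X :=
  match z with inl a => inl (fmap F f a) | inr x => inr x end.
Arguments Gmap F {X A B} f z.

Definition is_initial_algebra (F : SetFunctor) (X : Type) (A : Type)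
  (a : F A + X -> A) : Prop :=
  forall (B : Type) (b : F B + X -> B),
    exists h : A -> B, (forall z, h (a z) = b (Gmap F h z)) /\
      forall h' : A -> B, (forall z, h' (a z) = b (Gmap F h' z)) -> forall y, h' y = h y.

Definition is_terminal_coalgebra (F : SetFunctor) (X : Type) (A : Type)
  (a : A -> F A + X) : Prop :=
  forall (B : Type) (b : B -> F B + X),
    exists h : B -> A, (forall y, a (h y) = Gmap F h (b y)) /\
      forall h' : B -> A, (forall y, a (h' y) = Gmap F h' (b y)) -> forall y, h' y = h y.

(* Sigma n = the set of n-ary operation symbols *)
Definition HS (Sigma : nat -> Type) (Y : Type) : Type :=
  {n : nat & (Sigma n * ('I_n -> Y))%type}.

Definition HSmap (Sigma : nat -> Type) (A B : Type) (f : A -> B)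
  (h : HS Sigma A) : HS Sigma B :=
  match h with existT n (s, ys) => existT _ n (s, fun i => f (ys i)) end.

Definition is_presentation (F : SetFunctor) (Sigma : nat -> Type)
  (eps : forall Y : Type, HS Sigma Y -> F Y) : Prop :=
  (forall (A B : Type) (f : A -> B) (h : HS Sigma A),
      eps B (HSmap f h) = fmap F f (eps A h)) /\
  (forall (Y : Type) (y : F Y), exists h, eps Y h = y).

CoInductive tree (Sigma : nat -> Type) (X : Type) : Type :=
| Leaf (x : X)
| Node (n : nat) (s : Sigma n) (ch : 'I_n -> tree Sigma X).

Inductive ftree (Sigma : nat -> Type) (X : Type) : Type :=
| FLeaf (x : X)
| FNode (n : nat) (s : Sigma n) (ch : 'I_n -> ftree Sigma X).

Arguments Leaf {Sigma X} x.
Arguments Node {Sigma X n} s ch.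
Arguments FLeaf {Sigma X} x.
Arguments FNode {Sigma X n} s ch.

Fixpoint embed (Sigma : nat -> Type) (X : Type) (t : ftree Sigma X) : tree Sigma X :=
  match t with
  | FLeaf x => Leaf x
  | FNode n s ch => Node s (fun i => embed (ch i))
  end.

Definition ord0_elim (T : Type) (i : 'I_0) : T.
Proof. by case: i. Defined.

Definition pleaf (Sigma : nat -> Type) (X : Type) (p' : Sigma 0 + X) : ftree Sigma X :=
  match p' with
  | inl s => FNode s (@ord0_elim _)
  | inr x => FLeaf x
  end.

Fixpoint cut (Sigma : nat -> Type) (X : Type) (p' : Sigma 0 + X) (n : nat)
  (t : tree Sigma X) : ftree Sigma X :=
  match n with
  | 0 => pleaf p'
  | k.+1 => match t with
            | Leaf x => FLeaf x
            | Node _ s ch => FNode s (fun i => cut p' k (ch i))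
            end
  end.

Definition tree_destr (Sigma : nat -> Type) (X : Type) (t : tree Sigma X)
  : HS Sigma (tree Sigma X) + X :=
  match t with
  | Leaf x => inr x
  | Node n s ch => inl (existT _ n (s, ch))
  end.

Definition tree_coalg (F : SetFunctor) (Sigma : nat -> Type)
  (eps : forall Y : Type, HS Sigma Y -> F Y) (X : Type) (t : tree Sigma X)
  : F (tree Sigma X) + X :=
  match tree_destr t with
  | inl h => inl (eps _ h)
  | inr x => inr x
  end.

(* h_X : Phi_Sigma X -> Phi X, the unique homomorphism of H_Sigma(-)+X algebras
   into (Phi X, phi_X . (eps_{Phi X} + id)) *)
Fixpoint hX (F : SetFunctor) (Sigma : nat -> Type)
  (eps : forall Y : Type, HS Sigma Y -> F Y) (X : Type) (PhiX : Type)
  (phi : F PhiX + X -> PhiX) (t : ftree Sigma X) : PhiX :=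
  match t with
  | FLeaf x => phi (inr x)
  | FNode n s ch => phi (inl (eps PhiX (existT _ n (s, fun i => hX eps phi (ch i)))))
  end.

Definition sim_star (F : SetFunctor) (Sigma : nat -> Type)
  (eps : forall Y : Type, HS Sigma Y -> F Y) (X : Type) (PhiX : Type)
  (phi : F PhiX + X -> PhiX) (p' : Sigma 0 + X) (s s' : tree Sigma X) : Prop :=
  forall n, hX eps phi (cut p' n s) = hX eps phi (cut p' n s').

Definition cut_le (F : SetFunctor) (Sigma : nat -> Type)
  (eps : forall Y : Type, HS Sigma Y -> F Y) (X : Type) (PhiX : Type)
  (phi : F PhiX + X -> PhiX) (p' : Sigma 0 + X) (PsiX : Type)
  (khat : tree Sigma X -> PsiX) (x y : PsiX) : Prop :=
  x = y \/
  exists (s s' : tree Sigma X) (n : nat),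
    x = khat s /\ y = khat s' /\ sim_star eps phi p' s (embed (cut p' n s')).

Definition is_poset (T : Type) (le : T -> T -> Prop) : Prop :=
  (forall x, le x x) /\
  (forall x y z, le x y -> le y z -> le x z) /\
  (forall x y, le x y -> le y x -> x = y).

Definition directed (T : Type) (le : T -> T -> Prop) (D : T -> Prop) : Prop :=
  (exists x, D x) /\
  (forall x y, D x -> D y -> exists z, D z /\ le x z /\ le y z).

Definition is_join (T : Type) (le : T -> T -> Prop) (D : T -> Prop) (j : T) : Prop :=
  (forall x, D x -> le x j) /\
  (forall u, (forall x, D x -> le x u) -> le j u).

Definition is_cpo (T : Type) (le : T -> T -> Prop) : Prop :=
  is_poset le /\ forall D, directed le D -> exists j, is_join le D j.

Definition img (A B : Type) (f : A -> B) (D : A -> Prop) : B -> Prop :=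
  fun y => exists x, D x /\ y = f x.

Definition continuous (A B : Type) (leA : A -> A -> Prop) (leB : B -> B -> Prop)
  (f : A -> B) : Prop :=
  (forall x y, leA x y -> leB (f x) (f y)) /\
  (forall D j, directed leA D -> is_join leA D j -> is_join leB (img f D) (f j)).

Definition conservative_completion (P C : Type) (leP : P -> P -> Prop)
  (leC : C -> C -> Prop) (e : P -> C) : Prop :=
  is_cpo leC /\
  injective e /\ (forall a b, leP a b <-> leC (e a) (e b)) /\
  (forall D j, directed leP D -> is_join leP D j -> is_join leC (img e D) (e j)) /\
  (forall (Q : Type) (leQ : Q -> Q -> Prop), is_cpo leQ ->
     forall f : P -> Q, continuous leP leQ f ->
       exists g : C -> Q, continuous leC leQ g /\ (forall a, g (e a) = f a) /\
         forall g' : C -> Q, continuous leC leQ g' -> (forall a, g' (e a) = f a) ->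
           forall c, g' c = g c).

(* Main.v *)
Require Import Defs.
From mathcomp Require Import all_boot.
From Stdlib Require Import FunctionalExtensionality ProofIrrelevance ClassicalEpsilon Classical.

Section Main.
Variables (F : SetFunctor) (Sigma : nat -> Type) (eps : forall Y : Type, HS Sigma Y -> F Y).
Variable Heps : is_presentation eps.
Variables (X : Type) (p' : Sigma 0 + X) (PhiX : Type) (phi : F PhiX + X -> PhiX).
Variable Hphi : is_initial_algebra phi.
Variables (PsiX : Type) (tau : PsiX -> F PsiX + X).
Variable Htau : is_terminal_coalgebra tau.
Variable tau_inv : F PsiX + X -> PsiX.
Variable Htau_inv1 : forall x, tau_inv (tau x) = x.
Variable Htau_inv2 : forall z, tau (tau_inv z) = z.
Variable m : PhiX -> PsiX.
Variable Hm : forall z, tau (m (phi z)) = Gmap F m z.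

Lemma Gmap_comp A B C (f : A -> B) (g : B -> C) (z : F A + X) :
  Gmap F g (Gmap F f z) = Gmap F (fun a => g (f a)) z.
Proof. case: z => [a|x] //=; congr inl; exact: (esym (fmap_comp _ _ _)). Qed.

Lemma Gmap_ext A B (f g : A -> B) (z : F A + X) :
  (forall a, f a = g a) -> Gmap F f z = Gmap F g z.
Proof. by move=> H; have -> : f = g by apply: functional_extensionality. Qed.

Lemma eps_nat A B (f : A -> B) n s (ys : 'I_n -> A) :
  fmap F f (eps A (existT _ n (s, ys))) = eps B (existT _ n (s, fun i => f (ys i))).
Proof. by rewrite -(proj1 Heps). Qed.

Lemma tau_inj x y : tau x = tau y -> x = y.
Proof. by move=> E; rewrite -(Htau_inv1 x) E Htau_inv1. Qed.

Definition b0 : PhiX := hX eps phi (pleaf p').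

Fixpoint dd (n : nat) (y : PsiX) : PhiX :=
  match n with 0 => b0 | k.+1 => phi (Gmap F (dd k) (tau y)) end.

Lemma dd_mphi k z : dd k.+1 (m (phi z)) = phi (Gmap F (fun a => dd k (m a)) z).
Proof. by rewrite /= Hm Gmap_comp. Qed.

Lemma dd_m_b0 k : dd k (m b0) = b0.
Proof.
case: k => // k; rewrite /b0; case: p' => [s|x].
- rewrite [pleaf _]/= [hX _ _ (FNode _ _)]/= dd_mphi /=; congr (phi (inl _)).
  rewrite eps_nat; congr (eps _ (existT _ 0 (s, _))).
  by apply: functional_extensionality => -[].
- by rewrite [pleaf _]/= [hX _ _ (FLeaf _)]/= dd_mphi.
Qed.

Lemma dd_m_dd k n y : dd k (m (dd n y)) = dd (minn k n) y.
Proof.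
elim: k n y => [|k IH] n y; first by rewrite min0n.
case: n => [|n]; first by rewrite minn0 dd_m_b0.
rewrite [dd n.+1 y]/= dd_mphi Gmap_comp minnSS /=.
by apply: f_equal; apply: Gmap_ext => a; rewrite IH.
Qed.

Lemma dd_mono n N a : n <= N -> dd n (m a) = a -> dd N (m a) = a.
Proof. by move=> le E; rewrite -{1}E dd_m_dd (minn_idPr le) E. Qed.

Lemma finite_bound k (P : 'I_k -> nat -> Prop) :
  (forall i n N, n <= N -> P i n -> P i N) -> (forall i, exists n, P i n) ->
  exists N, forall i, P i N.
Proof.
elim: k P => [|k IH] P Hmon Hex; first by exists 0 => -[].
have [N1 HN1] := IH (fun i n => P (lift ord0 i) n) (fun i => Hmon _) (fun i => Hex _).
have [N0 HN0] := Hex ord0.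
exists (maxn N0 N1) => i.
case: (unliftP ord0 i) => [j ->|->].
- by apply: (Hmon _ N1); [rewrite leq_maxr|].
- by apply: (Hmon _ N0); [rewrite leq_maxl|].
Qed.

Lemma Phi_finite a : exists n, dd n (m a) = a.
Proof.
pose S := {a : PhiX | exists n, dd n (m a) = a}.
have sP : forall z : F S + X, exists n, dd n (m (phi (Gmap F (@proj1_sig _ _) z))) = phi (Gmap F (@proj1_sig _ _) z).
  case=> [u|x]; last by exists 1; rewrite dd_mphi.
  have [[k [s ys]] Eu] := proj2 Heps _ u.
  have [N HN] := @finite_bound k (fun i n => dd n (m (proj1_sig (ys i))) = proj1_sig (ys i))
     (fun i n N le => @dd_mono n N _ le) (fun i => proj2_sig (ys i)).
  exists N.+1; rewrite dd_mphi /= -Eu !eps_nat; congr (phi (inl (eps _ (existT _ k (s, _))))).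
  by apply: functional_extensionality => i; rewrite HN.
pose s (z : F S + X) : S := exist _ _ (sP z).
have [h [Hh _]] := Hphi _ s.
have [h0 [_ Hu]] := Hphi _ phi.
have E1 : forall a, proj1_sig (h a) = h0 a.
  move=> a0; apply: (Hu (fun a => proj1_sig (h a))) => z; rewrite Hh /= Gmap_comp //.
have E2 : forall a, a = h0 a.
  move=> a0; apply: (Hu (fun a => a)) => -[u|x] //=; by rewrite fmap_id.
by move: (proj2_sig (h a)); rewrite E1 -E2.
Qed.

Lemma m_inj : injective m.
Proof.
move=> a b E.
have [n Hn] := Phi_finite a; have [k Hk] := Phi_finite b.
by rewrite -(@dd_mono _ _ _ (leq_maxl n k) Hn) -(@dd_mono _ _ _ (leq_maxr n k) Hk) E.
Qed.


Lemma sigE (A : Type) (P : A -> Prop) (u v : {a : A | P a}) :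
  proj1_sig u = proj1_sig v -> u = v.
Proof. apply: eq_sig_hprop => x p q; apply: proof_irrelevance. Qed.

Lemma coprod_limit (B : nat -> Type) (f : forall n, B n.+1 -> B n) (L : Type)
  (p : forall n, L -> B n) :
  is_chain_limit (A := fun n => F (B n)) (fun n => fmap F (f n)) (fun n => fmap F (p n)) ->
  is_chain_limit (A := fun n => (F (B n) + X)%type) (fun n => Gmap F (f n)) (fun n => Gmap F (p n)).
Proof.
move=> [Hc Hu]; split.
  by move=> n [u|x] //=; congr inl; apply: Hc.
move=> Z z Hz.
have down : forall y x, z 0 y = inr x -> forall n, z n y = inr x.
  move=> y x E; elim=> [//|n IH]; case E': (z n.+1 y) => [c|x'].
    by move: (Hz n y); rewrite E' IH.
  by move: (Hz n y); rewrite E' IH => /= -[->].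
have up : forall n y x, z n y = inr x -> z 0 y = inr x.
  elim=> [//|n IH] y x E; apply: IH; by rewrite -(Hz n y) E.
have allinl : forall y c, z 0 y = inl c -> forall n, exists c', z n y = inl c'.
  move=> y c E n; case E': (z n y) => [c'|x]; first by exists c'.
  by move: (up _ _ _ E'); rewrite E.
pose Z' := {y : Z | forall n, exists c, z n y = inl c}.
pose getl n (y : Z') : F (B n) :=
  proj1_sig (constructive_indefinite_description _ (proj2_sig y n)).
have getlP : forall n y, z n (proj1_sig y) = inl (getl n y).
  by move=> n y; rewrite /getl; case: (constructive_indefinite_description _ _).
have getlC : is_chain_cone (A := fun n => F (B n)) (fun n => fmap F (f n)) getl.
  by move=> n y; have := Hz n (proj1_sig y); rewrite !getlP /= => -[].
have [hM [HhM UhM]] := Hu Z' getl getlC.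
pose hA (y : Z) (e : F (B 0) + X) (E : z 0 y = e) : F L + X :=
  match e as e0 return z 0 y = e0 -> F L + X with
  | inl c => fun E => inl (hM (exist _ y (allinl y c E)))
  | inr x => fun _ => inr x end E.
exists (fun y => hA y (z 0 y) erefl); split.
- move=> n y; suff: forall e E, Gmap F (p n) (hA y e E) = z n y by apply.
  case=> [c|x] E /=.
    by rewrite HhM (getlP n (exist _ y (allinl y c E))).
  by rewrite (down _ _ E).
- move=> h' Hh' y; suff: forall e E, h' y = hA y e E by apply.
  case=> [c|x] E /=.
  + case E1: (h' y) => [u|x1]; last by move: (Hh' 0 y); rewrite E1 E.
    congr inl.
    pose hM' (w : Z') : F L := match h' (proj1_sig w) with inl u => u | inr _ => hM w end.
    have <- : hM' (exist _ y (allinl y c E)) = hM (exist _ y (allinl y c E)).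
      apply: UhM => n w; rewrite /hM'; case E2: (h' (proj1_sig w)) => [u'|x'].
        by have := Hh' n (proj1_sig w); rewrite E2 getlP /= => -[].
      by have := Hh' 0 (proj1_sig w); rewrite E2 getlP.
    by rewrite /hM' /= E1.
  + case E1: (h' y) => [u|x1]; first by move: (Hh' 0 y); rewrite E1 E.
    by move: (Hh' 0 y); rewrite E1 E => /= -[->].
Qed.

Variable HFlim : preserves_omegaop_limits F.

Definition Aset n := {a : PhiX | dd n (m a) = a}.
Lemma sn_pf n y : dd n (m (dd n y)) = dd n y.
Proof. by rewrite dd_m_dd minnn. Qed.
Definition sn n (y : PsiX) : Aset n := exist _ (dd n y) (sn_pf n y).
Definition rr n (a : Aset n.+1) : Aset n := sn n (m (proj1_sig a)).
Arguments rr {n} a.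
Definition Lt := {w : forall n, Aset n | forall n, rr (w n.+1) = w n}.
Definition pr n (w : Lt) : Aset n := proj1_sig w n.

Lemma Lt_limit : is_chain_limit (fun n => @rr n) pr.
Proof.
split; first by move=> n [w Hw].
move=> Z z Hz; exists (fun y => @exist _ (fun w : forall n, Aset n => forall n, rr (w n.+1) = w n) (fun n => z n y) (fun n => Hz n y)); split => // h' Hh' y.
apply: sigE => /=; apply: functional_extensionality_dep => n; exact: Hh'.
Qed.

Definition jj n (a : Aset n.+1) : F (Aset n) + X := Gmap F (sn n) (tau (m (proj1_sig a))).
Arguments jj {n} a.

Lemma rr_sn n y : rr (sn n.+1 y) = sn n y.
Proof. apply: sigE; change (dd n (m (dd n.+1 y)) = dd n y); by rewrite dd_m_dd (minn_idPl (leqnSn n)). Qed.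
Lemma sn_m_dd n y : sn n (m (dd n y)) = sn n y.
Proof. by apply: sigE; rewrite /= sn_pf. Qed.
Lemma tau_m_dd n y : tau (m (dd n.+1 y)) = Gmap F (fun b => m (dd n b)) (tau y).
Proof. by rewrite /= Hm Gmap_comp. Qed.
Lemma jj_sn n y : jj (sn n.+1 y) = Gmap F (sn n) (tau y).
Proof. rewrite /jj /= tau_m_dd Gmap_comp; apply: Gmap_ext => b; exact: sn_m_dd. Qed.
Lemma jj_rr n (a : Aset n.+2) : Gmap F (@rr n) (jj a) = jj (rr a).
Proof. rewrite /rr jj_sn /jj Gmap_comp; apply: Gmap_ext => b; exact: (rr_sn n b). Qed.
Lemma phi_jj n (a : Aset n.+1) : phi (Gmap F (@proj1_sig _ _) (jj a)) = proj1_sig a.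
Proof. by rewrite /jj Gmap_comp -{2}(proj2_sig a). Qed.

Lemma limit_facts :
  (forall x y, (forall n, dd n x = dd n y) -> x = y) /\
  (forall a : nat -> PhiX, (forall k n, dd k (m (a n)) = a (minn k n)) ->
     exists y, forall n, dd n y = a n).
Proof.
have LG := @coprod_limit _ _ _ _ (@HFlim _ _ _ _ Lt_limit).
have cone : forall n w, Gmap F (@rr n) (jj (pr n.+2 w)) = jj (pr n.+1 w).
  by move=> n [w Hw]; rewrite /pr /= jj_rr Hw.
have [ell [Hell _]] := proj2 LG Lt (fun n w => jj (pr n.+1 w)) cone.
have [h [Hh _]] := Htau _ ell.
have H1 : forall n w, dd n (h w) = proj1_sig (pr n w).
  elim=> [|n IH] w; first by rewrite -(proj2_sig (pr 0 w)).
  rewrite /= Hh Gmap_comp (@Gmap_ext _ _ _ _ _ IH) -(@Gmap_comp _ _ _ (pr n)) Hell; exact: phi_jj.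
split.
- pose pi (y : PsiX) : Lt := @exist _ (fun w : forall n, Aset n => forall n, rr (w n.+1) = w n) (fun n => sn n y) (fun n => rr_sn n y).
  have cone2 : forall n y, Gmap F (@rr n) (Gmap F (sn n.+1) (tau y)) = Gmap F (sn n) (tau y).
    by move=> n y; rewrite Gmap_comp; apply: Gmap_ext => b; rewrite rr_sn.
  have [e [He Ue]] := proj2 LG PsiX (fun n y => Gmap F (sn n) (tau y)) cone2.
  have Eell : forall y, ell (pi y) = Gmap F pi (tau y).
    move=> y; rewrite (Ue (fun y => ell (pi y))); last by move=> n y'; rewrite Hell jj_sn.
    rewrite (Ue (fun y => Gmap F pi (tau y))) // => n y'; by rewrite Gmap_comp.
  have [h0 [_ Uh0]] := Htau _ tau.
  have hpi : forall y, h (pi y) = y.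
    move=> y; rewrite (Uh0 (fun y => h (pi y))); last by move=> y'; rewrite Hh Eell Gmap_comp.
    symmetry; apply: (Uh0 (fun y => y)) => y'; case: (tau y') => //= u; by rewrite fmap_id.
  move=> x y Hxy; rewrite -(hpi x) -(hpi y); congr h; apply: sigE => /=.
  by apply: functional_extensionality_dep => n; apply: sigE; rewrite /= Hxy.
- move=> a Ha.
  have pf : forall n, dd n (m (a n)) = a n by move=> n; rewrite Ha minnn.
  pose w0 n : Aset n := @exist _ (fun b => dd n (m b) = b) (a n) (pf n).
  have Hw0 : forall n, rr (w0 n.+1) = w0 n.
    by move=> n; apply: sigE; rewrite /= Ha (minn_idPl (leqnSn n)).
  exists (h (@exist _ (fun w : forall n, Aset n => forall n, rr (w n.+1) = w n) w0 Hw0)) => n; by rewrite H1.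
Qed.

Variable khat : tree Sigma X -> PsiX.
Variable Hkhat : forall t, tau (khat t) = Gmap F khat (tree_coalg eps t).

Lemma dd_khat k s : dd k (khat s) = hX eps phi (cut p' k s).
Proof.
elim: k s => [|k IH] s //.
rewrite [dd _ _]/= Hkhat Gmap_comp; case: s => [x|n s ch] //=.
rewrite eps_nat; congr (phi (inl (eps _ (existT _ n (s, _))))).
apply: functional_extensionality => i; exact: IH.
Qed.

Lemma khat_embed t : khat (embed t) = m (hX eps phi t).
Proof.
elim: t => [x|n s ch IH]; apply: tau_inj; rewrite /= Hkhat Hm //=.
rewrite !eps_nat; congr (inl (eps _ (existT _ n (s, _)))).
apply: functional_extensionality => i; exact: IH.
Qed.

Lemma tree_frob (t : tree Sigma X) :
  t = match t with Leaf x => Leaf x | Node n s ch => Node s ch end.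
Proof. by case: t. Qed.

Lemma khat_surj y : exists s, khat s = y.
Proof.
have pickP : forall y, exists c : HS Sigma PsiX + X,
    (match c with inl h => inl (eps _ h) | inr x => inr x end) = tau y.
  move=> y0; case: (tau y0) => [u|x].
    by have [h Eh] := proj2 Heps _ u; exists (inl h); rewrite Eh.
  by exists (inr x).
pose pick y := proj1_sig (constructive_indefinite_description _ (pickP y)).
have pickS : forall y, (match pick y with inl h => inl (eps _ h) | inr x => inr x end) = tau y.
  by move=> y0; rewrite /pick; case: (constructive_indefinite_description _ _).
pose unf := cofix unf (y : PsiX) : tree Sigma X :=
  match pick y with
  | inl (existT n (s, ys)) => Node s (fun i => unf (ys i))
  | inr x => Leaf x end.
have hom : forall y, tau (khat (unf y)) = Gmap F (fun y => khat (unf y)) (tau y).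
  move=> y0; rewrite Hkhat -pickS [unf y0]tree_frob /=.
  case: (pick y0) => [[n [s ys]]|x] //=.
  by rewrite !eps_nat.
have [h0 [_ Uh0]] := Htau _ tau.
exists (unf y); rewrite (Uh0 (fun y => khat (unf y))) //.
symmetry; apply: (Uh0 (fun y => y)) => y'; case: (tau y') => //= u; by rewrite fmap_id.
Qed.

Lemma le_iff x y : cut_le eps phi p' khat x y <-> (x = y \/ exists n, x = m (dd n y)).
Proof.
split.
- case=> [->|[s [s' [n [-> [-> Hs]]]]]]; first by left.
  right; exists n; apply: (proj1 limit_facts) => k.
  by rewrite dd_khat Hs -dd_khat khat_embed dd_khat.
- case=> [->|[n ->]]; first by left.
  right; have [s' <-] := khat_surj y.
  exists (embed (cut p' n s')), s', n; split; first by rewrite khat_embed dd_khat.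
  by split=> // k.
Qed.

Lemma sep x y : (forall n, dd n x = dd n y) -> x = y.
Proof. exact: (proj1 limit_facts). Qed.

Lemma agree_down {n k : nat} {z y : PsiX} : n <= k -> dd k z = dd k y -> dd n z = dd n y.
Proof.
move=> le E.
by rewrite -(minn_idPl le) -dd_m_dd E dd_m_dd.
Qed.

Lemma join_ext {T} {le : T -> T -> Prop} {A B : T -> Prop} {j : T} :
  (forall q, A q <-> B q) -> is_join le A j -> is_join le B j.
Proof.
move=> H [H1 H2]; split; first by move=> x /H; apply: H1.
by move=> u Hu; apply: H2 => x /H; apply: Hu.
Qed.

Lemma join_uniq {T} {le : T -> T -> Prop} {D : T -> Prop} {a b : T} :
  is_poset le -> is_join le D a -> is_join le D b -> a = b.
Proof.
move=> [_ [_ anti]] [Ha1 Ha2] [Hb1 Hb2].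
by apply: anti; [apply: Ha2 | apply: Hb2].
Qed.

Section Order.
Variable le : PsiX -> PsiX -> Prop.
Variable Hle : forall x y, le x y <-> (x = y \/ exists n, x = m (dd n y)).

Lemma le_refl x : le x x.
Proof. by apply/Hle; left. Qed.

Lemma le_cc n y : le (m (dd n y)) y.
Proof. by apply/Hle; right; exists n. Qed.

Lemma le_ccc n k y : n <= k -> le (m (dd n y)) (m (dd k y)).
Proof. by move=> nk; apply/Hle; right; exists n; rewrite dd_m_dd (minn_idPl nk). Qed.

Lemma le_poset : is_poset le.
Proof.
split; first exact: le_refl.
split.
- move=> x y z /Hle [->|[n ->]] // /Hle [->|[k ->]]; first exact: le_cc.
  by apply/Hle; right; exists (minn n k); rewrite dd_m_dd.
- move=> x y Hxy Hyx; case/Hle: Hxy => [//|[n Ex]]; case/Hle: Hyx => [->//|[k Ey]].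
  have Hx : x = m (dd (minn n k) x) by rewrite {1}Ex {1}Ey dd_m_dd.
  have Hy : y = m (dd (minn k n) y) by rewrite {1}Ey {1}Ex dd_m_dd.
  case: (leqP n k) => nk.
    by rewrite (minn_idPr nk) in Hy; rewrite Ex -Hy.
  by rewrite (minn_idPr (ltnW nk)) in Hx; rewrite Ey -Hx.
Qed.

Lemma le_trans x y z : le x y -> le y z -> le x z.
Proof. exact: (proj1 (proj2 le_poset)). Qed.

Lemma LEAST y u : (forall k, exists z, le z u /\ dd k z = dd k y) -> le y u.
Proof.
move=> hyp.
case: (classic (forall n, dd n y = dd n u)) => [H|H]; first by apply/Hle; left; apply: sep.
have [n0 Hn0] := not_all_ex_not _ _ H.
have key : forall k, n0 <= k -> forall z, le z u -> dd k z = dd k y ->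
    exists l, l < n0 /\ z = m (dd l u) /\ dd n0 y = dd l u.
  move=> k hk z /Hle [->|[l ->]] Ez.
  + by case: Hn0; rewrite (agree_down hk Ez).
  + have E2 := agree_down hk Ez; rewrite dd_m_dd in E2.
    case: (leqP n0 l) => nl.
      by case: Hn0; rewrite -E2 (minn_idPl nl).
    by exists l; split=> //; split=> //; rewrite -E2 (minn_idPr (ltnW nl)).
have [z0 [Hz0 E0]] := hyp n0.
have [l [hl [Ez0 El]]] := key n0 (leqnn _) z0 Hz0 E0.
apply/Hle; right; exists l; apply: sep => k.
have [z [Hz Ez]] := hyp (maxn k n0).
have [l' [hl' [Ez' El']]] := key _ (leq_maxr _ _) z Hz Ez.
have -> : dd k y = dd k z by apply: esym; apply: (agree_down (leq_maxl k n0)).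
by rewrite Ez' -El' El.
Qed.

Lemma STAB1 {n : nat} {x x' : PsiX} : m (dd n x) <> x -> le x x' -> dd n x' = dd n x.
Proof.
move=> Hx /Hle [->|[j Ej]] //.
case: (leqP j n) => jn.
  by case: Hx; rewrite {1}Ej dd_m_dd (minn_idPr jn) -Ej.
by rewrite Ej dd_m_dd (minn_idPl (ltnW jn)).
Qed.

Lemma stable_exists D : directed le D -> forall n, exists x, D x /\
  forall x', D x' -> le x x' -> dd n x' = dd n x.
Proof.
move=> [[x0 Dx0] Ddir] n.
case: (classic (exists x, D x /\ m (dd n x) <> x)) => [[x [Dx Hx]]|H].
  by exists x; split=> // x' _; apply: STAB1.
have all : forall x, D x -> m (dd n x) = x.
  move=> x Dx; apply: NNPP => Hx; apply: H; by exists x.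
suff : exists x, D x /\ forall x', D x' -> le x x' -> x' = x.
  by case=> x [Dx Hx]; exists x; split=> // x' Dx' lx; rewrite (Hx x' Dx' lx).
clear H; elim: n all => [|k IH] all.
  exists x0; split=> // x' Dx' /Hle [->|[j Ej]] //.
  by rewrite Ej -(all x' Dx') /= dd_m_b0.
case: (classic (exists x, D x /\ m (dd k x) <> x)) => [[x [Dx Hx]]|H2]; last first.
  apply: IH => x Dx; apply: NNPP => Hx; apply: H2; by exists x.
exists x; split=> // x' Dx' /Hle [->|[j Ej]] //.
case: (leqP j k) => jk.
  by case: Hx; rewrite {1}Ej dd_m_dd (minn_idPr jk) -Ej.
by rewrite Ej -(all x' Dx') dd_m_dd (minn_idPr jk).
Qed.

Lemma cpo_join D : directed le D ->
  exists j, is_join le D j /\ forall n, exists x, D x /\ dd n x = dd n j.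
Proof.
move=> Dd.
pose xs n := proj1_sig (constructive_indefinite_description _ (@stable_exists _ Dd n)).
have xsP : forall n, D (xs n) /\ forall x', D x' -> le (xs n) x' -> dd n x' = dd n (xs n).
  by move=> n; rewrite /xs; case: (constructive_indefinite_description _ _).
have common : forall a b, D a -> D b -> exists z, D z /\ le a z /\ le b z := proj2 Dd.
have [y Hy] : exists y, forall n, dd n y = dd n (xs n).
  apply: (proj2 limit_facts) => k n.
  rewrite dd_m_dd; set j := minn k n.
  have jn : j <= n by rewrite geq_minr.
  have [z [Dz [l1 l2]]] := common _ _ (proj1 (xsP n)) (proj1 (xsP j)).
  have E1 := proj2 (xsP n) z Dz l1.
  rewrite -(proj2 (xsP j) z Dz l2); apply: esym; exact: (agree_down jn E1).
exists y; split; last by move=> n; exists (xs n); split; [exact: (proj1 (xsP n))|].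
split.
- move=> x Dx.
  case: (classic (exists h, m (dd h x) = x)) => [[h Hh]|H].
  + have [z [Dz [l1 l2]]] := common _ _ Dx (proj1 (xsP h)).
    have E1 : dd h z = dd h y by rewrite Hy (proj2 (xsP h) z Dz l2).
    move/Hle: l1 => [Exz|[i Ei]].
      by apply/Hle; right; exists h; rewrite -E1 -Exz Hh.
    apply/Hle; right; exists (minn h i).
    rewrite -Hh {1}Ei dd_m_dd; congr m.
    apply: (agree_down _ E1); exact: geq_minl.
  + apply/Hle; left; apply: sep => n.
    have [z [Dz [l1 l2]]] := common _ _ Dx (proj1 (xsP n)).
    have Hn : m (dd n x) <> x by move=> E; apply: H; exists n.
    by rewrite -(STAB1 Hn l1) (proj2 (xsP n) z Dz l2) Hy.
- move=> u Hu; apply: LEAST => k.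
  by exists (xs k); split; [apply: Hu; exact: (proj1 (xsP k))|rewrite Hy].
Qed.

Lemma le_cpo : is_cpo le.
Proof.
split; first exact: le_poset.
by move=> D /cpo_join [j [Hj _]]; exists j.
Qed.

Lemma cuts_dir y k0 : directed le (fun z => exists n, z = m (dd (n + k0) y)).
Proof.
split; first by exists (m (dd (0 + k0) y)), 0.
move=> a b [n ->] [k ->]; exists (m (dd (maxn n k + k0) y)); split; first by exists (maxn n k).
by split; apply: le_ccc; rewrite leq_add2r ?leq_maxl ?leq_maxr.
Qed.

Lemma cuts_join y k0 : is_join le (fun z => exists n, z = m (dd (n + k0) y)) y.
Proof.
split; first by move=> x [n ->]; exact: le_cc.
move=> u Hu; apply: LEAST => k; exists (m (dd (k + k0) y)); split; first by apply: Hu; exists k.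
by rewrite dd_m_dd (minn_idPl (leq_addr _ _)).
Qed.

Lemma main_abstract :
  is_cpo le /\
  conservative_completion (fun a b => le (m a) (m b)) le m /\
  (continuous (fun z z' => le (tau_inv z) (tau_inv z')) le tau_inv /\
   (forall z, tau_inv (Gmap F m z) = m (phi z)) /\
   (forall g : F PsiX + X -> PsiX, continuous (fun z z' => le (tau_inv z) (tau_inv z')) le g ->
      (forall z, g (Gmap F m z) = m (phi z)) -> forall w, g w = tau_inv w)).
Proof.
split; first exact: le_cpo.
split.
  split; first exact: le_cpo.
  split; first exact: m_inj.
  split; first by [].
  split.
  - move=> D j [[a0 Da0] Ddir] [Jub Jleast].
    have dirM : directed le (img m D).
      split; first by exists (m a0), a0.
      move=> x y [a [Da ->]] [b [Db ->]]; have [c [Dc [ac bc]]] := Ddir a b Da Db.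
      by exists (m c); split; [exists c|].
    have [y0 [[Yub Yleast] _]] := @cpo_join _ dirM.
    split; first by move=> x [a [Da ->]]; apply: Jub.
    move=> u Hu; have y0u := Yleast u Hu.
    have y0j : le y0 (m j) by apply: Yleast => x [a [Da ->]]; apply: Jub.
    have [a1 Ea1] : exists a1, y0 = m a1.
      by move/Hle: y0j => [->|[n ->]]; [exists j|exists (dd n (m j))].
    have : le (m j) (m a1).
      by apply: Jleast => a Da; rewrite -Ea1; apply: Yub; exists a.
    by rewrite -Ea1 => h; apply: le_trans h y0u.
  - move=> Q leQ [HQ Qj] f [fmono fcont].
    have [Qr [Qt _]] := HQ.
    pose Dy y := fun q => exists n, q = f (dd n y).
    have dirf : forall y, directed leQ (Dy y).
      move=> y; split; first by exists (f (dd 0 y)), 0.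
      move=> a b [n ->] [k ->]; exists (f (dd (maxn n k) y)); split; first by exists (maxn n k).
      by split; apply: fmono; apply: le_ccc; rewrite ?leq_maxl ?leq_maxr.
    pose g y := proj1_sig (constructive_indefinite_description _ (Qj _ (dirf y))).
    have gP : forall y, is_join leQ (Dy y) (g y).
      by move=> y; rewrite /g; case: (constructive_indefinite_description _ _).
    have gm : forall a, g (m a) = f a.
      move=> a; apply: (join_uniq HQ (gP (m a))); split.
        by move=> q [n ->]; apply: fmono; exact: le_cc.
      move=> u Hu; have [N HN] := Phi_finite a.
      by rewrite -{1}HN; apply: Hu; exists N.
    have gmono : forall x y, le x y -> leQ (g x) (g y).
      move=> x y /Hle [->|[n ->]]; first exact: Qr.
      apply: (proj2 (gP _)) => q [k ->]; apply: (proj1 (gP y)).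
      by exists (minn k n); rewrite dd_m_dd.
    exists g; split; [|split] => //.
    + split; first exact: gmono.
      * move=> D j Dd Dj.
        have [j' [Dj' Hj']] := @cpo_join _ Dd.
        have jj' : j = j' := join_uniq le_poset Dj Dj'.
        split.
          by move=> q [x [Dx ->]]; apply: gmono; apply: (proj1 Dj).
        move=> u Hu; apply: (proj2 (gP _)) => q [n ->].
        have [x [Dx Ex]] := Hj' n.
        apply: (Qt _ (g x)); first by apply: (proj1 (gP x)); exists n; rewrite jj' Ex.
        by apply: Hu; exists x.
    + move=> g' [g'mono g'cont] Hg' y.
      have := g'cont _ _ (cuts_dir y 0) (cuts_join y 0).
      move=> J; apply: (join_uniq HQ _ (gP y)); apply: (join_ext _ J) => q; split.
        by move=> [z [[n ->] ->]]; exists n; rewrite addn0 Hg'.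
      by move=> [n ->]; exists (m (dd (n + 0) y)); split; [exists n|rewrite Hg' addn0].
split.
  split; first by [].
  move=> D j Dd [Jub Jl]; split; first by move=> x [d [Dd' ->]]; apply: Jub.
  move=> u Hu; have := Jl (tau u); rewrite Htau_inv1; apply => d Dd'.
  by apply: Hu; exists d.
split; first by move=> z; rewrite -Hm Htau_inv1.
move=> g [gmono gcont] Hg w.
set y := tau_inv w.
pose E := fun z => exists n, z = tau (m (dd (n + 1) y)).
have dirE : directed (fun z z' => le (tau_inv z) (tau_inv z')) E.
  split; first by exists (tau (m (dd (0 + 1) y))), 0.
  move=> a b [n ->] [k ->]; exists (tau (m (dd (maxn n k + 1) y))); split; first by exists (maxn n k).
  by rewrite !Htau_inv1; split; apply: le_ccc; rewrite leq_add2r ?leq_maxl ?leq_maxr.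
have joinE : is_join (fun z z' => le (tau_inv z) (tau_inv z')) E w.
  split; first by move=> x [n ->]; rewrite Htau_inv1; apply: le_cc.
  move=> u Hu; apply: (proj2 (cuts_join y 1)) => z [n ->].
  by have := Hu _ (ex_intro _ n erefl); rewrite Htau_inv1.
have J := gcont _ _ dirE joinE.
apply: (join_uniq le_poset _ (cuts_join y 1)); apply: (join_ext _ J) => q; split.
  move=> [z [[n ->] ->]]; exists n.
  by rewrite addn1 [dd n.+1 y]/= Hm Hg.
move=> [n ->]; exists (tau (m (dd (n + 1) y))); split; first by exists n.
by rewrite addn1 [dd n.+1 y]/= Hm Hg.
Qed.

End Order.

End Main.

Theorem corollary5p12
  (F : SetFunctor) (HF : bicontinuous F)
  (Sigma : nat -> Type) (eps : forall Y : Type, HS Sigma Y -> F Y)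
  (Heps : is_presentation eps)
  (X : Type) (HX : inhabited X) (p' : Sigma 0 + X)
  (PhiX : Type) (phi : F PhiX + X -> PhiX) (Hphi : is_initial_algebra phi)
  (PsiX : Type) (tau : PsiX -> F PsiX + X) (Htau : is_terminal_coalgebra tau)
  (tau_inv : F PsiX + X -> PsiX)
  (Htau_inv1 : forall x, tau_inv (tau x) = x) (Htau_inv2 : forall z, tau (tau_inv z) = z)
  (m : PhiX -> PsiX) (Hm : forall z, tau (m (phi z)) = Gmap F m z)
  (khat : tree Sigma X -> PsiX)
  (Hkhat : forall t, tau (khat t) = Gmap F khat (tree_coalg eps t)) :
  let lePsi := cut_le eps phi p' khat in
  let lePhi := fun a b => lePsi (m a) (m b) in
  let leFPsi := fun z z' => lePsi (tau_inv z) (tau_inv z') in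
  is_cpo lePsi /\
  conservative_completion lePhi lePsi m /\
  (continuous leFPsi lePsi tau_inv /\
   (forall z, tau_inv (Gmap F m z) = m (phi z)) /\
   (forall g : F PsiX + X -> PsiX, continuous leFPsi lePsi g ->
      (forall z, g (Gmap F m z) = m (phi z)) -> forall w, g w = tau_inv w)).
Proof.
move=> lePsi lePhi leFPsi.
exact: (@main_abstract F Sigma eps Heps X p' PhiX phi Hphi PsiX tau Htau tau_inv
  Htau_inv1 m Hm (proj2 HF) lePsi
  (@le_iff F Sigma eps Heps X p' PhiX phi PsiX tau Htau tau_inv Htau_inv1 m Hm (proj2 HF) khat Hkhat)).
Qed.
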